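(* Let $R$ be a tolerance relation on $\{1,\ldots,n\}$ and $A=A(R)$. Let $\mathcal{D}(A)$ be the set of $\rho\in A$ with $\rho\succeq 0$ and $\mathrm{Tr}(\rho)=1$. Then the map $\mathcal{D}(A)\to\mathcal{S}(A)$, $\rho\mapsto\varphi_\rho$, where $\varphi_\rho(a)=\mathrm{Tr}(\rho^*a)$ for $a\in A$, is a bijection; moreover it is a homeomorphism when $\mathcal{D}(A)$ carries the norm topology and $\mathcal{S}(A)$ the weak-$*$ topology.
   Context: A tolerance relation on a set is a reflexive and symmetric relation. $T:M_n(\mathbb{C})\to M_n(\mathbb{C})$ is $T(b)=\sum_{(i,j)\in R}E_{ii}bE_{jj}$, and $A(R)=T(M_n(\mathbb{C}))$ (matrices vanishing at positions outside $R$). For $a\in A$, $a\succeq 0$ means $a=T(b)$ for some positive semidefinite $b\in M_n(\mathbb{C})$. $\mathcal{S}(A)$ is the set of states of the operator system $A$: linear functionals $\varphi:A\to\mathbb{C}$ with $\varphi(a)\ge0$ for every positive semidefinite $a\in A$ and $\varphi(1)=1$. *)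

(* Defs.v *)
From HB Require Import structures.
From mathcomp Require Import all_boot all_order all_algebra.
From mathcomp Require Import complex.
From mathcomp Require Import reals.
Set Implicit Arguments. Unset Strict Implicit. Unset Printing Implicit Defensive.
Import Order.TTheory GRing.Theory Num.Theory.
Local Open Scope ring_scope.

Section Defs.
Variables (R : realType) (n : nat).
Local Notation C := (R[i]).
Implicit Types (rel : rel 'I_n) (a b rho : 'M[C]_n).

Definition tolerance rel := reflexive rel /\ symmetric rel.

Definition adjmx (m p : nat) (M : 'M[C]_(m, p)) : 'M[C]_(p, m) :=
  (map_mx (@conjc R) M)^T.

Definition psd b := forall v : 'cV[C]_n, 0 <= (adjmx v *m b *m v) ord0 ord0.

(* T(b) = sum_{(i,j) in R} E_ii b E_jj *)
Definition Tmap rel b : 'M[C]_n :=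
  \matrix_(i, j) (if rel i j then b i j else 0).

(* membership in A(R) = T(M_n(C)): vanishing outside R *)
Definition in_A rel a := forall i j, ~~ rel i j -> a i j = 0.

Definition succeq0 rel a := exists2 b, psd b & a = Tmap rel b.

Definition in_D rel rho := succeq0 rel rho /\ \tr rho = 1.

(* states of the operator system A; a functional is represented by a
   function on all of M_n(C), only its restriction to A matters *)
Definition is_state rel (phi : 'M[C]_n -> C) :=
  [/\ forall (c : C) a b, in_A rel a -> in_A rel b ->
        phi (c *: a + b) = c * phi a + phi b,
      forall a, in_A rel a -> psd a -> 0 <= phi a
    & phi 1%:M = 1].

Definition phi_of rho : 'M[C]_n -> C := fun a => \tr (adjmx rho *m a).

(* a norm on M_n(C) (all norms are equivalent in finite dimension) *)
Definition mxnorm a : C := \sum_i \sum_j `|a i j|.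
End Defs.

(* Main.v *)
Require Import Defs.
From HB Require Import structures.
From mathcomp Require Import all_boot all_order all_algebra.
From mathcomp Require Import complex.
From mathcomp Require Import reals classical_sets.
From mathcomp Require Import ring lra.
From Stdlib Require Import ClassicalEpsilon.
Import Order.TTheory GRing.Theory Num.Theory.
Local Open Scope complex_scope.
Local Open Scope ring_scope.
Set Implicit Arguments. Unset Strict Implicit. Unset Printing Implicit Defensive.
Local Notation cRe := complex.Re.
Local Notation cIm := complex.Im.
Section Basic.
Variable R : realType.
Local Notation C := (R[i]).

Lemma conjcK' (x : C) : conjc (conjc x) = x.
Proof. by case: x => a b; rewrite /conjc opprK. Qed.

Lemma adjmxE m p (A : 'M[C]_(m, p)) i j : adjmx A i j = conjc (A j i).
Proof. by rewrite !mxE. Qed.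

Lemma adjmxD m p (A B : 'M[C]_(m, p)) : adjmx (A + B) = adjmx A + adjmx B.
Proof. by apply/matrixP => i j; rewrite !mxE rmorphD. Qed.

Lemma adjmxN m p (A : 'M[C]_(m, p)) : adjmx (- A) = - adjmx A.
Proof. by apply/matrixP => i j; rewrite !mxE rmorphN. Qed.

Lemma adjmxB m p (A B : 'M[C]_(m, p)) : adjmx (A - B) = adjmx A - adjmx B.
Proof. by rewrite adjmxD adjmxN. Qed.

Lemma adjmxZ m p (c : C) (A : 'M[C]_(m, p)) : adjmx (c *: A) = conjc c *: adjmx A.
Proof. by apply/matrixP => i j; rewrite !mxE rmorphM. Qed.

Lemma adjmxK m p (A : 'M[C]_(m, p)) : adjmx (adjmx A) = A.
Proof. by apply/matrixP => i j; rewrite !mxE conjcK'. Qed.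

Lemma adjmxM m p q (A : 'M[C]_(m, p)) (B : 'M[C]_(p, q)) :
  adjmx (A *m B) = adjmx B *m adjmx A.
Proof.
apply/matrixP => i j; rewrite !mxE rmorph_sum; apply: eq_bigr => k _.
by rewrite !mxE rmorphM mulrC.
Qed.

Lemma adjmx_scalar n (c : C) : adjmx (c%:M : 'M[C]_n) = (conjc c)%:M.
Proof.
by apply/matrixP => i j; rewrite !mxE raddfMn eq_sym.
Qed.

Lemma conjc_real (r : R) : conjc (r%:C : C) = r%:C.
Proof. by rewrite /conjc /= oppr0. Qed.

Lemma conjc_i : conjc ('i%C : C) = - 'i%C.
Proof. by apply/eqP; rewrite eq_complex /= oppr0 !eqxx. Qed.

Lemma Im_add (x y : C) : cIm (x + y) = cIm x + cIm y.
Proof. by case: x => a b; case: y => c d; simpc. Qed.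
Lemma Re_add (x y : C) : cRe (x + y) = cRe x + cRe y.
Proof. by case: x => a b; case: y => c d; simpc. Qed.
Lemma Re_opp (x : C) : cRe (- x) = - cRe x.
Proof. by case: x => a b; simpc. Qed.
Lemma Im_opp (x : C) : cIm (- x) = - cIm x.
Proof. by case: x => a b; simpc. Qed.
Lemma Im_mul_i (x : C) : cIm ('i%C * x) = cRe x.
Proof. by rewrite mulrC ImiRe. Qed.
Lemma Re_mul_i (x : C) : cRe ('i%C * x) = - cIm x.
Proof. by rewrite mulrC ReiNIm. Qed.
Lemma Re_realM (r : R) (x : C) : cRe (r%:C * x) = r * cRe x.
Proof. by case: x => a b; simpc. Qed.
Lemma Im_realM (r : R) (x : C) : cIm (r%:C * x) = r * cIm x.
Proof. by case: x => a b; simpc. Qed.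
Lemma ge0_real (x : C) : 0 <= x -> (cRe x)%:C = x.
Proof. by move=> /ger0_Im; case: x => a b /= ->. Qed.
Lemma Re_ge0 (x : C) : 0 <= x -> 0 <= cRe x.
Proof. by case: x => a b; rewrite lecE /= => /andP[]. Qed.
Lemma conj_eq_real (x : C) : conjc x = x -> (cRe x)%:C = x.
Proof.
case: x => a b /= [] h.
have : b *+ 2 = 0 by rewrite mulr2n -{1}h addNr.
by move/eqP; rewrite mulrn_eq0 /= => /eqP ->.
Qed.
End Basic.
Section PSD.
Variables (R : realType) (n : nat).
Local Notation C := (R[i]).
Local Notation M := ('M[C]_n).
Implicit Types (b : M) (v w : 'cV[C]_n).

Definition qf (b : M) (v w : 'cV[C]_n) : C := (adjmx v *m b *m w) ord0 ord0.

Lemma qfDl b v1 v2 w : qf b (v1 + v2) w = qf b v1 w + qf b v2 w.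
Proof. by rewrite /qf adjmxD !mulmxDl mxE. Qed.
Lemma qfDr b v w1 w2 : qf b v (w1 + w2) = qf b v w1 + qf b v w2.
Proof. by rewrite /qf mulmxDr mxE. Qed.
Lemma qfZl b c v w : qf b (c *: v) w = conjc c * qf b v w.
Proof. by rewrite /qf adjmxZ -!scalemxAl mxE. Qed.
Lemma qfZr b c v w : qf b v (c *: w) = c * qf b v w.
Proof. by rewrite /qf -scalemxAr mxE. Qed.

Lemma adjmx_delta (p : 'I_n) : adjmx (delta_mx p ord0 : 'cV[C]_n) = delta_mx ord0 p.
Proof.
apply/matrixP => k l; rewrite !mxE rmorph_nat.
by rewrite (ord1 k) andbC.
Qed.

Lemma qf_delta b p q : qf b (delta_mx p ord0) (delta_mx q ord0) = b p q.
Proof. by rewrite /qf adjmx_delta -rowE -colE !mxE. Qed.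

Lemma psd_herm b : psd b -> adjmx b = b.
Proof.
move=> hb; apply/matrixP => p q; rewrite adjmxE.
pose ep : 'cV[C]_n := delta_mx p ord0; pose eq : 'cV[C]_n := delta_mx q ord0.
have hp : 0 <= qf b ep ep := hb ep. have hq : 0 <= qf b eq eq := hb eq.
have h1 : 0 <= qf b (ep + eq) (ep + eq) := hb _.
have h2 : 0 <= qf b (ep + 'i%C *: eq) (ep + 'i%C *: eq) := hb _.
move: (ger0_Im hp) (ger0_Im hq) (ger0_Im h1) (ger0_Im h2).
rewrite !(qfDl, qfDr, qfZl, qfZr) !qf_delta conjc_i.
case: (b p p) => ? ?; case: (b q q) => ? ?; case: (b p q) => a c; case: (b q p) => a' c'.
simpc => /= -> -> e1 e2; congr Complex; lra.
Qed.
End PSD.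
Section OU.
Variables (R : realType) (n : nat).
Local Notation C := (R[i]).
Local Notation M := ('M[C]_n).
Implicit Types (b e : M) (v w : 'cV[C]_n).

Lemma qfE b v w : qf b v w = \sum_p \sum_q conjc (v p ord0) * b p q * w q ord0.
Proof.
rewrite /qf mxE exchange_big /=; apply: eq_bigr => q _.
rewrite mxE big_distrl /=; apply: eq_bigr => p _.
by rewrite !mxE.
Qed.

Lemma qfbD b1 b2 v w : qf (b1 + b2) v w = qf b1 v w + qf b2 v w.
Proof. by rewrite /qf mulmxDr mulmxDl mxE. Qed.
Lemma qfbZ (a : C) b v w : qf (a *: b) v w = a * qf b v w.
Proof. by rewrite /qf -scalemxAr -scalemxAl mxE. Qed.

Lemma qf1 v : qf 1%:M v v = \sum_k `|v k ord0| ^+ 2.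
Proof.
rewrite /qf mulmx1 mxE; apply: eq_bigr => k _.
by rewrite normCK !mxE mulrC.
Qed.

Lemma qf_herm_real e v : adjmx e = e -> conjc (qf e v v) = qf e v v.
Proof.
by move=> he; rewrite /qf -adjmxE !adjmxM adjmxK he mulmxA.
Qed.

Lemma norm_le_sum v p : `|v p ord0| ^+ 2 <= \sum_k `|v k ord0| ^+ 2.
Proof.
rewrite (bigD1 p) //= lerDl; apply: sumr_ge0 => k _.
exact: exprn_ge0.
Qed.

Lemma prod_le_sq (a b : C) : 0 <= a -> 0 <= b -> a * b <= a ^+ 2 + b ^+ 2.
Proof.
move=> ha hb; have /orP[hab|hba] := real_leVge (ger0_real ha) (ger0_real hb).
  apply: (le_trans (ler_wpM2r hb hab)); rewrite -expr2 lerDr.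
  exact: exprn_ge0.
apply: (le_trans (ler_wpM2l ha hba)); rewrite -expr2 lerDl.
exact: exprn_ge0.
Qed.

Lemma herm_ou e : adjmx e = e -> exists c : R, psd (c%:C *: 1%:M + e).
Proof.
move=> he.
pose K : C := 2 * mxnorm e.
have K0 : 0 <= K.
  apply: mulr_ge0 => //; apply: sumr_ge0 => p _; apply: sumr_ge0 => q _.
  exact: normr_ge0.
exists (cRe K); rewrite (ge0_real K0) => v.
change (0 <= qf (K *: 1%:M + e) v v).
rewrite qfbD qfbZ qf1.
set N := \sum_k _.
have N0 : 0 <= N by apply: sumr_ge0 => k _; exact: exprn_ge0.
have hr : qf e v v \is Num.real by apply/CrealP; exact: qf_herm_real.
have hb : `|qf e v v| <= K * N.
  rewrite qfE; apply: (le_trans (ler_norm_sum _ _ _)).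
  have -> : K * N = mxnorm e * (N + N) by rewrite /K; ring.
  rewrite /mxnorm mulr_suml; apply: ler_sum => p _.
  apply: (le_trans (ler_norm_sum _ _ _)).
  rewrite mulr_suml; apply: ler_sum => q _.
  rewrite !normrM norm_conjC [`|v p _| * _]mulrC -mulrA.
  apply: ler_wpM2l; first exact: normr_ge0.
  apply: (le_trans (prod_le_sq (normr_ge0 _) (normr_ge0 _))).
  by apply: lerD; apply: norm_le_sum.
have := real_lerNnormlW hr hb.
by rewrite -subr_ge0 opprK addrC.
Qed.
End OU.
Section TracePos.
Variables (R : realType) (n : nat).
Local Notation C := (R[i]).
Local Notation M := ('M[C]_n).
Implicit Types (a b e : M) (v w : 'cV[C]_n).

Lemma tstar_adj (P : M) : map_mx Num.conj P^T = adjmx P.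
Proof. by apply/matrixP => k l; rewrite !mxE. Qed.

Lemma mx3_diag (X Y : M) k :
  (X *m Y *m adjmx X) k k = qf Y (adjmx (row k X)) (adjmx (row k X)).
Proof.
rewrite /qf adjmxK !mxE; apply: eq_bigr => l _; rewrite !mxE.
congr (_ * _); apply: eq_bigr => p _; by rewrite !mxE.
Qed.

Lemma tr_psd_ge0 a b : psd a -> psd b -> 0 <= \tr (b *m a).
Proof.
move=> pa pb; have ha := psd_herm pa.
have an : a \is normalmx.
  by apply/normalmxP; rewrite tstar_adj ha.
have /orthomx_spectralP := an.
set P := spectralmx a; set d := spectral_diag a.
have Pu : P \is unitarymx := spectral_unitarymx a.
rewrite invmx_unitary // tstar_adj => ea.
have PP : P *m adjmx P = 1%:M by move/unitarymxP: Pu; rewrite tstar_adj.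
have hd : diag_mx d = P *m a *m adjmx P.
  by rewrite ea !mulmxA PP mul1mx -mulmxA PP mulmx1.
have -> : \tr (b *m a) = \tr ((P *m b *m adjmx P) *m diag_mx d).
  by rewrite [in LHS]ea !mulmxA mxtrace_mulC !mulmxA.
rewrite mul_mx_diag.
rewrite /mxtrace; apply: sumr_ge0 => k _; rewrite mxE.
apply: mulr_ge0; first by rewrite mx3_diag; exact: pb.
have -> : d ord0 k = diag_mx d k k by rewrite mxE eqxx mulr1n.
by rewrite hd mx3_diag; exact: pa.
Qed.
End TracePos.
Section Ext.
Variables (R : realType) (n : nat).
Local Notation C := (R[i]).
Local Notation M := ('M[C]_n).
Implicit Types (a b e x y w : M) (v : 'cV[C]_n).

Lemma psd_add a b : psd a -> psd b -> psd (a + b).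
Proof.
move=> pa pb v; have := pa v; have := pb v.
change (0 <= qf b v v -> 0 <= qf a v v -> 0 <= qf (a + b) v v).
by rewrite qfbD => h1 h2; apply: addr_ge0.
Qed.

Lemma psd_scale (r : R) a : 0 <= r -> psd a -> psd (r%:C *: a).
Proof.
move=> hr pa v; change (0 <= qf (r%:C *: a) v v); rewrite qfbZ.
by apply: mulr_ge0; [rewrite ler0c | exact: pa].
Qed.

Definition subsp (W : M -> Prop) :=
  [/\ forall x y, W x -> W y -> W (x + y),
      forall (r : R) x, W x -> W (r%:C *: x) & W 1%:M].

Definition goodf (W : M -> Prop) (f : M -> R) :=
  [/\ forall x y, W x -> W y -> f (x + y) = f x + f y,
      forall (r : R) x, W x -> f (r%:C *: x) = r * f x
    & forall x, W x -> psd x -> 0 <= f x].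

Definition ext (W : M -> Prop) e x := exists w (s : R), W w /\ x = w + s%:C *: e.

Lemma realC0 : (0 : R)%:C = 0 :> C. Proof. by []. Qed.
Lemma realC1 : (1 : R)%:C = 1 :> C. Proof. by []. Qed.

Lemma subsp0 W : subsp W -> W 0.
Proof. by case=> _ hs h1; have := hs 0 _ h1; rewrite realC0 scale0r. Qed.

Lemma subspB W x y : subsp W -> W x -> W y -> W (x - y).
Proof.
case=> ha hs h1 hx hy; apply: ha => //.
by have := hs (-1) _ hy; rewrite rmorphN1 scaleN1r.
Qed.

Lemma ext_sub W e x : W x -> ext W e x.
Proof. by move=> hx; exists x, 0; rewrite realC0 scale0r addr0. Qed.

Lemma ext_e W e : subsp W -> ext W e e.
Proof. by move=> hW; exists 0, 1; rewrite realC1 scale1r add0r; split=> //; exact: subsp0. Qed.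

Lemma subsp_ext W e : subsp W -> subsp (ext W e).
Proof.
move=> hW; case: (hW) => ha hs h1; split; last exact: ext_sub.
- move=> _ _ [w1 [s1 [h1w ->]]] [w2 [s2 [h2w ->]]].
  exists (w1 + w2), (s1 + s2); split; first exact: ha.
  by rewrite rmorphD scalerDl addrACA.
- move=> r _ [w [s [hw ->]]]; exists (r%:C *: w), (r * s); split; first exact: hs.
  by rewrite scalerDr scalerA rmorphM.
Qed.
End Ext.
Section Step.
Variables (R : realType) (n : nat).
Local Notation C := (R[i]).
Local Notation M := ('M[C]_n).
Implicit Types (a b e x y w : M).
Local Open Scope classical_set_scope.

Lemma ext_in W e x : W e -> subsp W -> ext W e x -> W x.
Proof.
move=> We [ha hs _] [w [s [hw ->]]]; apply: ha => //; exact: hs.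
Qed.

Lemma scaleCK (s : R) x : s != 0 -> (s^-1)%:C *: (s%:C *: x) = x.
Proof. by move=> hs; rewrite scalerA -rmorphM mulVf // rmorph1 scale1r. Qed.

Lemma step W f e : subsp W -> goodf W f -> adjmx e = e ->
  exists g, goodf (ext W e) g /\ forall x, W x -> g x = f x.
Proof.
move=> hW hf he; case: (hW) => hWa hWs hW1; case: (hf) => hfa hfs hfp.
have [We | nWe] := classic (W e).
  exists f; split=> //; split.
  - by move=> x y /(ext_in We hW) hx /(ext_in We hW) hy; exact: hfa.
  - by move=> r x /(ext_in We hW) hx; exact: hfs.
  - by move=> x /(ext_in We hW) hx; exact: hfp.
have uniq w1 w2 (s1 s2 : R) : W w1 -> W w2 -> w1 + s1%:C *: e = w2 + s2%:C *: e ->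
    s1 = s2 /\ w1 = w2.
  move=> h1 h2 heq; have [es|ns] := eqVneq s1 s2.
    by split=> //; move: heq; rewrite es => /addIr.
  exfalso; apply: nWe.
  have hd : (s2 - s1)%:C *: e = w1 - w2.
    rewrite rmorphB scalerBl; apply/eqP; rewrite subr_eq addrAC eq_sym subr_eq heq.
    by rewrite addrC.
  have : W ((s2 - s1)^-1%:C *: (w1 - w2)) by apply: hWs; exact: subspB.
  by rewrite -hd scaleCK // subr_eq0 eq_sym.
have [c1 hc1] := herm_ou he.
have [c2 hc2] : exists c : R, psd (c%:C *: 1%:M - e).
  by apply: herm_ou; rewrite adjmxN he.
pose S := [set y : R | exists w, [/\ W w, psd (w + e) & y = - f w]].
have Sne : S !=set0.
  by exists (- f (c1%:C *: 1%:M)), (c1%:C *: 1%:M); split=> //; exact: hWs.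
have Sub : (ubound S) (f (c2%:C *: 1%:M)).
  move=> _ [w [hw hwe ->]].
  have : psd (w + c2%:C *: 1%:M).
    by have := psd_add hwe hc2; rewrite addrACA subrr addr0.
  move=> /(hfp _ (hWa _ _ hw (hWs _ _ hW1))); rewrite hfa //; last exact: hWs.
  by move=> h; lra.
pose t := sup S.
have tlow w : W w -> psd (w + e) -> - f w <= t.
  move=> hw hwe; apply: ub_le_sup; first by exists (f (c2%:C *: 1%:M)).
  by exists w.
have tup w : W w -> psd (w - e) -> t <= f w.
  move=> hw hwe; apply: ge_sup => // _ [w' [hw' hwe' ->]].
  have : psd (w' + w) by have := psd_add hwe' hwe; rewrite addrACA subrr addr0.
  move=> /(hfp _ (hWa _ _ hw' hw)); rewrite hfa //.
  by move=> h; lra.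
pose P x (p : M * R) := W p.1 /\ x = p.1 + p.2%:C *: e.
pose g x := let p := epsilon (inhabits (0 : M, 0 : R)) (P x) in f p.1 + p.2 * t.
have gE w (s : R) : W w -> g (w + s%:C *: e) = f w + s * t.
  move=> hw; rewrite /g.
  have [|hw' heq] := @epsilon_spec _ (inhabits (0 : M, 0 : R)) (P (w + s%:C *: e)).
    by exists (w, s).
  by have [e1 e2] := uniq _ _ _ _ hw hw' heq; rewrite -e1 -e2.
exists g; split; last first.
  move=> x hx; have := gE x 0 hx; rewrite realC0 scale0r addr0 => ->.
  by rewrite mul0r addr0.
split.
- move=> _ _ [w1 [s1 [h1 ->]]] [w2 [s2 [h2 ->]]].
  rewrite addrACA -scalerDl -rmorphD !gE //; last exact: hWa.
  by rewrite hfa // mulrDl addrACA.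
- move=> r _ [w [s [hw ->]]].
  rewrite scalerDr scalerA -rmorphM !gE //; last exact: hWs.
  by rewrite hfs // mulrDr mulrA.
- move=> _ [w [s [hw ->]]] hp; rewrite gE //; move: hp.
  have [sneg|spos|es] := ltgtP s 0; last first.
  + move=> hp; rewrite es mul0r addr0; apply: hfp => //; move: hp.
    by rewrite es realC0 scale0r addr0.
  + move=> hp; have hs : s != 0 by rewrite gt_eqF.
    have : psd ((s^-1)%:C *: w + e).
      have si : 0 <= s^-1 by rewrite invr_ge0 ltW.
      have := psd_scale si hp.
      by rewrite scalerDr scaleCK.
    move=> /(tlow _ (hWs _ _ hw)); rewrite hfs // => h.
    have hv : s * s^-1 = 1 := mulfV hs.
    have := ler_wpM2l (ltW spos) h.
    rewrite mulrN mulrA hv mul1r => h2; lra.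
  + move=> hp; have hs : - s != 0 by rewrite oppr_eq0 lt_eqF.
    have : psd (((- s)^-1)%:C *: w - e).
      have si : 0 <= (- s)^-1 by rewrite invr_ge0 oppr_ge0 ltW.
      have := psd_scale si hp.
      have -> : s%:C *: e = - ((- s)%:C *: e) by rewrite rmorphN scaleNr opprK.
      by rewrite scalerDr scalerN scaleCK.
    move=> /(tup _ (hWs _ _ hw)); rewrite hfs // => h.
    have hv : (- s) * (- s)^-1 = 1 := mulfV hs.
    have ns : 0 <= - s by rewrite oppr_ge0 ltW.
    have := ler_wpM2l ns h.
    rewrite mulrA hv mul1r => h2; lra.
Qed.
End Step.
Section Iter.
Variables (R : realType) (n : nat).
Local Notation C := (R[i]).
Local Notation M := ('M[C]_n).
Implicit Types (a b e x y w : M).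

Fixpoint Wl (W : M -> Prop) (es : seq M) : M -> Prop :=
  if es is e :: es' then ext (Wl W es') e else W.

Lemma subsp_Wl W es : subsp W -> subsp (Wl W es).
Proof. by move=> hW; elim: es => [|e es IH] //=; exact: subsp_ext. Qed.

Lemma Wl_sub W es x : W x -> Wl W es x.
Proof. by move=> hx; elim: es => [|e es IH] //=; exact: ext_sub. Qed.

Lemma Wl_mem W es e : subsp W -> e \in es -> Wl W es e.
Proof.
move=> hW; elim: es => [|e' es IH] //=; rewrite in_cons => /orP[/eqP ->|/IH h].
  exact/ext_e/subsp_Wl.
exact: ext_sub.
Qed.

Lemma ext_list W f es : subsp W -> goodf W f -> (forall e, e \in es -> adjmx e = e) ->
  exists g, goodf (Wl W es) g /\ forall x, W x -> g x = f x.
Proof.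
move=> hW hf; elim: es => [|e es IH] hes /=; first by exists f.
have [g1 [hg1 ag1]] : exists g, goodf (Wl W es) g /\ forall x, W x -> g x = f x.
  by apply: IH => e0 he0; apply: hes; rewrite in_cons he0 orbT.
have [g2 [hg2 ag2]] := step (subsp_Wl es hW) hg1 (hes e (mem_head _ _)).
exists g2; split=> // x hx; rewrite ag2 ?ag1 //; exact: Wl_sub.
Qed.
End Iter.

Section Herm.
Variables (R : realType) (n : nat).
Local Notation C := (R[i]).
Local Notation M := ('M[C]_n).
Implicit Types (a b e x y w : M).

Definition Hp x := x + adjmx x.
Definition Kp x := (- 'i%C) *: (x - adjmx x).

Lemma Hp_herm x : adjmx (Hp x) = Hp x.
Proof. by rewrite /Hp adjmxD adjmxK addrC. Qed.

Lemma Kp_herm x : adjmx (Kp x) = Kp x.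
Proof.
apply/matrixP => k l; rewrite /Kp !mxE.
case: (x k l) => x1 x2; case: (x l k) => y1 y2.
rewrite /conjc /=; simpc; congr Complex; ring.
Qed.

Lemma Hp0 : Hp (0 : M) = 0.
Proof. by apply/matrixP => k l; rewrite !mxE rmorph0 addr0. Qed.
Lemma Kp0 : Kp (0 : M) = 0.
Proof. by apply/matrixP => k l; rewrite !mxE rmorph0 subr0 mulr0. Qed.

Lemma HpD x y : Hp (x + y) = Hp x + Hp y.
Proof. by rewrite /Hp adjmxD addrACA. Qed.
Lemma KpD x y : Kp (x + y) = Kp x + Kp y.
Proof. by rewrite /Kp adjmxD opprD addrACA scalerDr. Qed.

Lemma HpZ (c : C) x :
  Hp (c *: x) = (cRe c)%:C *: Hp x + (- cIm c)%:C *: Kp x.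
Proof.
apply/matrixP => k l; rewrite /Hp /Kp !mxE.
case: c => a b; case: (x k l) => x1 x2; case: (x l k) => y1 y2.
rewrite -!complexr0 /conjc /=; simpc; congr Complex; ring.
Qed.

Lemma KpZ (c : C) x :
  Kp (c *: x) = (cIm c)%:C *: Hp x + (cRe c)%:C *: Kp x.
Proof.
apply/matrixP => k l; rewrite /Hp /Kp !mxE.
case: c => a b; case: (x k l) => x1 x2; case: (x l k) => y1 y2.
rewrite -!complexr0 /conjc /=; simpc; congr Complex; ring.
Qed.

Lemma HpKp x : Hp x + 'i%C *: Kp x = x + x.
Proof.
apply/matrixP => k l; rewrite /Hp /Kp !mxE.
case: (x k l) => x1 x2; case: (x l k) => y1 y2.
rewrite /conjc /=; simpc; congr Complex; ring.
Qed.

Lemma Hp_hermE x : adjmx x = x -> Hp x = x + x.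
Proof. by rewrite /Hp => ->. Qed.
Lemma Kp_hermE x : adjmx x = x -> Kp x = 0.
Proof. by rewrite /Kp => ->; rewrite subrr scaler0. Qed.
End Herm.
Section Alg.
Variables (R : realType) (n : nat) (rel : rel 'I_n).
Local Notation C := (R[i]).
Local Notation M := ('M[C]_n).
Implicit Types (a b e x y w : M).

Lemma inA_add x y : in_A rel x -> in_A rel y -> in_A rel (x + y).
Proof. by move=> hx hy i j hij; rewrite mxE hx // hy // addr0. Qed.
Lemma inA_scale (c : C) x : in_A rel x -> in_A rel (c *: x).
Proof. by move=> hx i j hij; rewrite mxE hx // mulr0. Qed.
Lemma inA_0 : in_A rel (0 : M).
Proof. by move=> i j _; rewrite mxE. Qed.
Lemma inA_1 : reflexive rel -> in_A rel (1%:M : M).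
Proof.
move=> hr i j hij; rewrite mxE; case: eqP => // eij.
by move: hij; rewrite eij hr.
Qed.
Lemma inA_adj x : symmetric rel -> in_A rel x -> in_A rel (adjmx x).
Proof. by move=> hs hx i j hij; rewrite adjmxE hx ?rmorph0 // hs. Qed.
Lemma inA_B x y : in_A rel x -> in_A rel y -> in_A rel (x - y).
Proof. by move=> hx hy; apply: inA_add => //; rewrite -scaleN1r; apply: inA_scale. Qed.
Lemma inA_T b : in_A rel (Tmap rel b).
Proof. by move=> i j hij; rewrite mxE (negbTE hij). Qed.

Lemma trT b a : symmetric rel -> in_A rel a -> \tr (Tmap rel b *m a) = \tr (b *m a).
Proof.
move=> hs ha; rewrite /mxtrace; apply: eq_bigr => i _; rewrite !mxE.
apply: eq_bigr => j _; rewrite !mxE; case: ifP => // hij.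
by rewrite ha ?mulr0 // hs hij.
Qed.

Lemma adjmx_T b : symmetric rel -> adjmx (Tmap rel b) = Tmap rel (adjmx b).
Proof. by move=> hs; apply/matrixP => i j; rewrite !mxE hs; case: ifP; rewrite ?rmorph0. Qed.

Variable phi : M -> C.

Lemma st_0 : is_state rel phi -> phi 0 = 0.
Proof.
case=> hl _ _; have := hl 1 0 0 inA_0 inA_0.
rewrite scale1r addr0 mul1r => h; apply: (addrI (phi 0)); rewrite addr0 -h; reflexivity.
Qed.
Lemma st_D x y : is_state rel phi -> in_A rel x -> in_A rel y -> phi (x + y) = phi x + phi y.
Proof. by case=> hl _ _ hx hy; have := hl 1 x y hx hy; rewrite scale1r mul1r. Qed.
Lemma st_Z (c : C) x : is_state rel phi -> in_A rel x -> phi (c *: x) = c * phi x.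
Proof.
move=> hst hx; have z := st_0 hst; case: hst => hl _ _.
by have := hl c x 0 hx inA_0; rewrite !addr0 z addr0.
Qed.

Lemma Im0_real (z : C) : cIm z = 0 -> (cRe z)%:C = z.
Proof. by case: z => a b /= ->. Qed.

Lemma st_real h : tolerance rel -> is_state rel phi -> adjmx h = h -> in_A rel h ->
  (cRe (phi h))%:C = phi h.
Proof.
move=> [hr hs] hst hh hA; have [c hc] := herm_ou hh.
have A1 := inA_1 hr.
have hA' : in_A rel (c%:C *: 1%:M + h) by apply: inA_add => //; exact: inA_scale.
have := hst; case=> _ hp h1.
have := hp _ hA' hc; rewrite st_D //; last exact: inA_scale.
rewrite st_Z // h1 mulr1 => /ger0_Im; rewrite Im_add /= add0r.
exact: Im0_real.
Qed.
End Alg.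
Section Surj.
Variables (R : realType) (n : nat) (rel : rel 'I_n).
Local Notation C := (R[i]).
Local Notation M := ('M[C]_n).
Implicit Types (a b e x y w : M).

Lemma psd_outer (v : 'cV[C]_n) : psd (v *m adjmx v).
Proof.
move=> w; rewrite (mulmxA (adjmx w) v (adjmx v)) -(mulmxA (adjmx w *m v)) mxE big_ord1.
have -> : adjmx v *m w = adjmx (adjmx w *m v) by rewrite adjmxM adjmxK.
by rewrite adjmxE; exact: mulcJ_ge0.
Qed.

Lemma half_twice (x : M) : (2^-1 : R)%:C *: (x + x) = x.
Proof.
apply/matrixP => k l; rewrite !mxE; case: (x k l) => a b; rewrite -!complexr0.
simpc; congr Complex; lra.
Qed.

Lemma qf_tr b (v : 'cV[C]_n) : qf b v v = \tr (b *m (v *m adjmx v)).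
Proof.
rewrite /qf -trace_mx11 (mxtrace_mulC (adjmx v *m b) v) mulmxA.
rewrite (mulmxA v (adjmx v) b) -(mulmxA b v (adjmx v)); exact: mxtrace_mulC.
Qed.

Lemma surj phi : tolerance rel -> is_state rel phi ->
  exists2 rho, in_D rel rho & forall a, in_A rel a -> phi_of rho a = phi a.
Proof.
move=> [hr hs] hst.
have sW : subsp (@in_A R n rel).
  by split; [exact: inA_add | move=> r x hx; exact: inA_scale | exact: inA_1].
pose f0 x := cRe (phi x).
have gf : goodf (@in_A R n rel) f0.
  split.
  - by move=> x y hx hy; rewrite /f0 (st_D hst hx hy) Re_add.
  - by move=> r x hx; rewrite /f0 (st_Z _ hst hx) Re_realM.
  - by move=> x hx px; rewrite /f0; apply: Re_ge0; case: hst => _ hp _; exact: hp.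
pose es := [seq Hp (delta_mx p.1 p.2 : M) | p <- enum {: 'I_n * 'I_n}] ++
           [seq Kp (delta_mx p.1 p.2 : M) | p <- enum {: 'I_n * 'I_n}].
have hes : forall e, e \in es -> adjmx e = e.
  by move=> e; rewrite mem_cat => /orP[] /mapP [p _ ->]; [exact: Hp_herm | exact: Kp_herm].
have [g [[gD gZ gP] ag]] := ext_list sW gf hes.
pose WF := Wl (@in_A R n rel) es.
have sF : subsp WF := subsp_Wl es sW.
have sFa : forall x y, WF x -> WF y -> WF (x + y) by case: sF.
have sFs : forall (r : R) x, WF x -> WF (r%:C *: x) by case: sF.
have F0 : WF 0 := subsp0 sF.
have herm_in x : adjmx x = x -> WF x.
  move=> hx; rewrite -(half_twice x) -Hp_hermE //; apply: (sFs).
  rewrite {1}(matrix_sum_delta x) (big_morph (@Hp R n) (@HpD R n) (@Hp0 R n)).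
  apply: (big_ind WF) => // i _; rewrite (big_morph (@Hp R n) (@HpD R n) (@Hp0 R n)).
  apply: (big_ind WF) => // j _; rewrite HpZ; apply: (sFa); apply: (sFs); apply: Wl_mem => //.
    by rewrite mem_cat; apply/orP; left; apply/mapP; exists (i, j); rewrite ?mem_enum.
  by rewrite mem_cat; apply/orP; right; apply/mapP; exists (i, j); rewrite ?mem_enum.
have hHp x : WF (Hp x) by apply: herm_in; exact: Hp_herm.
have hKp x : WF (Kp x) by apply: herm_in; exact: Kp_herm.
pose G x : C := 2^-1 * ((g (Hp x))%:C + 'i%C * (g (Kp x))%:C).
have GD x y : G (x + y) = G x + G y.
  rewrite /G HpD KpD (gD _ _ (hHp x) (hHp y)) (gD _ _ (hKp x) (hKp y)) !rmorphD; ring.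
have GZ (c : C) x : G (c *: x) = c * G x.
  rewrite /G HpZ KpZ !(gD _ _ (sFs _ _ (hHp x)) (sFs _ _ (hKp x))).
  rewrite !(gZ _ _ (hHp x)) !(gZ _ _ (hKp x)).
  rewrite mulrCA; congr (_ * _).
  move: (g (Hp x)) (g (Kp x)) => u v; case: c => a b /=.
  rewrite -!complexr0; simpc; congr Complex; ring.
have G0 : G 0 = 0.
  by have := GZ 0 0; rewrite scale0r mul0r.
have Gsum := big_morph G GD G0.
have g0 : g 0 = 0.
  by have := gZ 0 0 F0; rewrite realC0 scale0r mul0r.
have Gherm y : adjmx y = y -> G y = (g y)%:C.
  move=> hy; rewrite /G Hp_hermE // Kp_hermE // g0 gD; try exact: herm_in.
  rewrite -!complexr0; simpc; congr Complex; rewrite expr0n /= addr0; field; done.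
have GA a : in_A rel a -> G a = phi a.
  move=> ha.
  have hHa : in_A rel (Hp a) by apply: inA_add => //; exact: inA_adj.
  have hKa : in_A rel (Kp a) by apply: inA_scale; apply: inA_B => //; exact: inA_adj.
  rewrite /G !ag // /f0 !(st_real (conj hr hs) hst) //; try exact: Hp_herm; try exact: Kp_herm.
  rewrite -(st_Z _ hst hKa) -(st_D hst hHa) ?HpKp; last exact: inA_scale.
  by rewrite (st_D hst ha ha); field.
pose b : M := \matrix_(p, q) G (delta_mx q p).
have trb x : \tr (b *m x) = G x.
  rewrite {2}[x]matrix_sum_delta exchange_big Gsum /mxtrace.
  apply: eq_bigr => p _; rewrite mxE Gsum; apply: eq_bigr => q _.
  by rewrite !mxE GZ mulrC.
have pb : psd b.
  move=> v; change (0 <= qf b v v); rewrite qf_tr trb Gherm; last first.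
    by rewrite adjmxM adjmxK.
  rewrite ler0c; apply: gP; last exact: psd_outer.
  by apply: herm_in; rewrite adjmxM adjmxK.
exists (Tmap rel b).
  split; first by exists b.
  rewrite -[Tmap rel b]mulmx1 trT //; last exact: inA_1.
  by rewrite trb GA; [case: hst | exact: inA_1].
move=> a ha; rewrite /phi_of adjmx_T // (psd_herm pb) trT //.
by rewrite trb GA.
Qed.
End Surj.
Section Final.
Variables (R : realType) (n : nat) (rel : rel 'I_n).
Local Notation C := (R[i]).
Local Notation M := ('M[C]_n).
Implicit Types (a b e x y w rho : M).

Lemma tr_delta x (i j : 'I_n) : \tr (x *m delta_mx i j) = x j i.
Proof.
rewrite /mxtrace (bigD1 j) //= big1 ?addr0.
  rewrite mxE (bigD1 i) //= big1 ?addr0; first by rewrite mxE !eqxx mulr1.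
  by move=> k hk; rewrite mxE (negbTE hk) mulr0.
move=> k hk; rewrite mxE; apply: big1 => l _; rewrite mxE.
by rewrite [k == j](negbTE hk) andbF mulr0.
Qed.

Lemma phi_of_delta rho (i j : 'I_n) : phi_of rho (delta_mx i j) = conjc (rho i j).
Proof. by rewrite /phi_of tr_delta adjmxE. Qed.

Lemma phi_ofB rho1 rho2 a : phi_of rho1 a - phi_of rho2 a = phi_of (rho1 - rho2) a.
Proof. by rewrite /phi_of adjmxB mulmxBl raddfB. Qed.

Lemma mxnorm_ge0 x : 0 <= mxnorm x.
Proof. by apply: sumr_ge0 => p _; apply: sumr_ge0 => q _; exact: normr_ge0. Qed.

Lemma entry_le_mxnorm x p q : `|x p q| <= mxnorm x.
Proof.
rewrite /mxnorm (bigD1 p) //= (bigD1 q) //= -addrA lerDl.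
apply: addr_ge0; first by apply: sumr_ge0 => k _; exact: normr_ge0.
by apply: sumr_ge0 => k _; apply: sumr_ge0 => l _; exact: normr_ge0.
Qed.

Lemma tr_bound x a : `|phi_of x a| <= mxnorm x * mxnorm a.
Proof.
rewrite /phi_of /mxtrace; apply: (le_trans (ler_norm_sum _ _ _)).
rewrite /mxnorm exchange_big mulr_suml; apply: ler_sum => k _.
rewrite mxE; apply: (le_trans (ler_norm_sum _ _ _)).
rewrite mulr_suml; apply: ler_sum => l _.
rewrite !mxE normrM norm_conjC; apply: ler_wpM2l; first exact: normr_ge0.
exact: entry_le_mxnorm.
Qed.

Lemma state_of rho : tolerance rel -> in_D rel rho -> is_state rel (phi_of rho).
Proof.
move=> [hr hs] [[b pb ->] htr]; split.
- move=> c a a' _ _; rewrite /phi_of mulmxDr -scalemxAr mxtraceD mxtraceZ //.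
- move=> a ha pa; rewrite /phi_of adjmx_T // (psd_herm pb) trT //.
  exact: tr_psd_ge0.
- by rewrite /phi_of adjmx_T // (psd_herm pb) mulmx1.
Qed.

Lemma inj_of rho1 rho2 : in_D rel rho1 -> in_D rel rho2 ->
  (forall a, in_A rel a -> phi_of rho1 a = phi_of rho2 a) -> rho1 = rho2.
Proof.
move=> [[b1 _ ->] _] [[b2 _ ->] _] h; apply/matrixP => i j.
case hij: (rel i j); last by rewrite !mxE hij.
have hd : in_A rel (delta_mx i j : M).
  move=> k l hkl; rewrite mxE; case: eqP => // eki; case: eqP => //= elj.
  by move: hkl; rewrite eki elj hij.
have := h _ hd; rewrite !phi_of_delta => /(congr1 conjc); rewrite !conjcK'.
by [].
Qed.
End Final.
Section Cont.
Variables (R : realType) (n : nat) (rel : rel 'I_n).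
Local Notation C := (R[i]).
Local Notation M := ('M[C]_n).
Implicit Types (a b e x y w rho : M).

Lemma cont_of rho0 (s : seq M) (eps : C) : 0 < eps ->
  exists2 delta : C, 0 < delta &
    forall rho, mxnorm (rho - rho0) < delta ->
      forall a, a \in s -> `|phi_of rho a - phi_of rho0 a| < eps.
Proof.
move=> he; pose K := 1 + \sum_(a <- s) mxnorm a.
have K0 : 0 < K.
  apply: (lt_le_trans ltr01); rewrite lerDl.
  by apply: sumr_ge0 => a _; exact: mxnorm_ge0.
exists (eps / K); first exact: divr_gt0.
move=> rho hr a ha; rewrite phi_ofB.
apply: (le_lt_trans (tr_bound _ _)).
have haK : mxnorm a <= K.
  rewrite /K (big_rem a) //= addrCA lerDl; apply: addr_ge0 => //.
  by apply: sumr_ge0 => b _; exact: mxnorm_ge0.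
apply: (le_lt_trans (ler_wpM2l (mxnorm_ge0 _) haK)).
by rewrite -ltr_pdivlMr.
Qed.

Lemma invcont_of rho0 (eps : C) : 0 < eps ->
  exists (s : seq M) (delta : C),
    [/\ forall a, a \in s -> in_A rel a, 0 < delta &
      forall rho : M, in_D rel rho -> in_D rel rho0 ->
        (forall a, a \in s -> `|phi_of rho a - phi_of rho0 a| < delta) ->
        mxnorm (rho - rho0) < eps].
Proof.
move=> he.
exists [seq Tmap rel (delta_mx p.1 p.2 : M) | p <- enum {: 'I_n * 'I_n}].
pose N : C := (n * n).+1%:R.
have N0 : 0 < N by rewrite ltr0n.
exists (eps / N); split.
- by move=> a /mapP [p _ ->]; exact: inA_T.
- exact: divr_gt0.
move=> rho [[b1 _ e1] _] [[b2 _ e2] _] h.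
have hle : forall i j, `|(rho - rho0) i j| <= eps / N.
  move=> i j; case hij: (rel i j); last first.
    by rewrite mxE e1 e2 !mxE hij subrr normr0; apply: ltW; exact: divr_gt0.
  have hm : Tmap rel (delta_mx i j : M) \in
      [seq Tmap rel (delta_mx p.1 p.2 : M) | p <- enum {: 'I_n * 'I_n}].
    by apply/mapP; exists (i, j); rewrite ?mem_enum.
  have := h _ hm.
  have -> : Tmap rel (delta_mx i j : M) = delta_mx i j.
    apply/matrixP => k l; rewrite !mxE; case: ifP => // hkl.
    by case: eqP => // eki; case: eqP => //= elj; move: hkl; rewrite eki elj hij.
  by rewrite phi_ofB phi_of_delta norm_conjC => /ltW.
apply: (le_lt_trans (y := \sum_(i < n) \sum_(j < n) (eps / N))).
  by apply: ler_sum => i _; apply: ler_sum => j _; exact: hle.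
rewrite sumr_const sumr_const !card_ord -mulrnA -mulr_natr.
by rewrite mulrAC ltr_pdivrMr // ltr_pM2l // ltr_nat.
Qed.
End Cont.
Theorem corollary4p8 (R : realType) (n : nat) (rel : rel 'I_n) :
  tolerance rel ->
  [/\ (* rho |-> phi_rho maps D(A) into S(A) *)
      (forall rho : 'M[R[i]]_n, in_D rel rho -> is_state rel (phi_of rho)),
      (* injective (functionals compared on A) *)
      (forall rho1 rho2 : 'M[R[i]]_n, in_D rel rho1 -> in_D rel rho2 ->
         (forall a, in_A rel a -> phi_of rho1 a = phi_of rho2 a) -> rho1 = rho2),
      (* surjective *)
      (forall phi : 'M[R[i]]_n -> R[i], is_state rel phi ->
         exists2 rho, in_D rel rho & forall a, in_A rel a -> phi_of rho a = phi a),
      (* continuous: norm topology on D(A) -> weak-* topology on S(A) *)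
      (forall rho0 : 'M[R[i]]_n, in_D rel rho0 ->
         forall (s : seq 'M[R[i]]_n) (eps : R[i]),
           (forall a, a \in s -> in_A rel a) -> 0 < eps ->
           exists2 delta : R[i], 0 < delta &
             forall rho, in_D rel rho -> mxnorm (rho - rho0) < delta ->
               forall a, a \in s -> `|phi_of rho a - phi_of rho0 a| < eps)
    & (* inverse continuous: weak-* topology on S(A) -> norm topology on D(A) *)
      (forall rho0 : 'M[R[i]]_n, in_D rel rho0 ->
         forall eps : R[i], 0 < eps ->
           exists (s : seq 'M[R[i]]_n) (delta : R[i]),
             [/\ forall a, a \in s -> in_A rel a, 0 < delta &
               forall rho : 'M[R[i]]_n, in_D rel rho ->
                 (forall a, a \in s -> `|phi_of rho a - phi_of rho0 a| < delta) ->
                 mxnorm (rho - rho0) < eps])].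
Proof.
move=> ht; split.
- by move=> rho hrho; apply: state_of.
- by move=> rho1 rho2 h1 h2 h; apply: inj_of h1 h2 h.
- by move=> phi hphi; apply: surj.
- move=> rho0 _ s eps _ he; have [d hd hh] := cont_of rho0 s he.
  by exists d => // rho _; exact: hh.
- move=> rho0 h0 eps he; have [s [d [h1 h2 h3]]] := invcont_of rel rho0 he.
  by exists s, d; split=> // rho hr; exact: h3.
Qed.
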